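(* Let $h_1,h_2,\dots$ be real-valued i.i.d. random variables, and for $N\in\mathbb N$ set $\delta_N=\mathbb E(h_1\mathbf 1_{\{|h_1|\le N\}})$ and $\sigma_N=\frac1N\mathbb E(h_1^2\mathbf 1_{\{|h_1|\le N\}})$. For every $\eta>0$ there exists $N_\eta\in\mathbb N$ such that $\delta_N^2\le\eta N(1+\sigma_N)$ for all $N\ge N_\eta$. *)

(* Defs.v *)
From HB Require Import structures.
From mathcomp Require Import all_boot all_order all_algebra.
From mathcomp Require Import all_classical all_reals all_analysis.
Set Implicit Arguments. Unset Strict Implicit. Unset Printing Implicit Defensive.
Import Order.TTheory GRing.Theory Num.Theory.
Local Open Scope classical_set_scope.
Local Open Scope ring_scope.

Definition mutually_independent d (T : measurableType d) (R : realType)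
  (P : probability T R) (h : nat -> {RV P >-> R}) : Prop :=
  forall (S : seq nat) (B : nat -> set R),
    uniq S -> (forall i, measurable (B i)) ->
    P (\bigcap_(i in [set` S]) (h i @^-1` B i)) =
    (\prod_(i <- S) P (h i @^-1` B i))%E.

Definition identically_distributed d (T : measurableType d) (R : realType)
  (P : probability T R) (h : nat -> {RV P >-> R}) : Prop :=
  forall i (A : set R), measurable A ->
    distribution P (h i) A = distribution P (h 0%N) A.

Definition iid d (T : measurableType d) (R : realType)
  (P : probability T R) (h : nat -> {RV P >-> R}) : Prop :=
  mutually_independent h /\ identically_distributed h.

(* delta_N = E(X 1_{|X| <= N}) (a finite real: the integrand is bounded). *)
Definition trunc_mean d (T : measurableType d) (R : realType)
  (P : probability T R) (X : T -> R) (N : nat) : R :=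
  fine (expectation P (fun w => X w * (if `|X w| <= N%:R then 1 else 0))).

Definition trunc_sigma d (T : measurableType d) (R : realType)
  (P : probability T R) (X : T -> R) (N : nat) : R :=
  (N%:R)^-1 * fine (expectation P (fun w => X w ^+ 2 * (if `|X w| <= N%:R then 1 else 0))).

(* Main.v *)
Require Import Defs.
From HB Require Import structures.
From mathcomp Require Import all_boot all_order all_algebra.
From mathcomp Require Import all_classical all_reals all_analysis.
From mathcomp Require Import measurable_realfun.
From mathcomp Require Import ring lra.
Import Order.TTheory GRing.Theory Num.Theory.
Local Open Scope ring_scope.

Module Aux.
Local Open Scope classical_set_scope.
Section S.
Context {d : measure_display} {T : measurableType d} {R : realType} (P : probability T R).

Definition Ef (f : T -> R) : R := fine (\int[P]_x (f x)%:E).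
Definition bmf (f : T -> R) := measurable_fun setT f /\ exists C : R, forall x, `|f x| <= C.

Lemma bmf_int f : bmf f -> P.-integrable setT (EFin \o f).
Proof.
move=> [mf [C hC]].
have hc := finite_measure_integrable_cst P C (@measurableT _ T).
apply: (le_integrable measurableT _ _ hc).
- exact/measurable_EFinP.
- move=> x _ /=; rewrite lee_fin.
  exact: le_trans (hC x) (ler_norm _).
Qed.

Lemma Ef_E f : bmf f -> (\int[P]_x (f x)%:E = (Ef f)%:E)%E.
Proof. by move=> bf; rewrite fineK // (integrable_fin_num measurableT (bmf_int _ bf)). Qed.

Lemma bmfD f g : bmf f -> bmf g -> bmf (fun x => f x + g x).
Proof.
move=> [mf [C hC]] [mg [D hD]]; split; first exact: measurable_funD.
exists (C + D) => x; apply: le_trans (ler_normD _ _) _; exact: lerD.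
Qed.

Lemma bmfZ k f : bmf f -> bmf (fun x => k * f x).
Proof.
move=> [mf [C hC]]; split; first exact: measurable_funM.
exists (`|k| * C) => x; rewrite normrM; exact: ler_wpM2l.
Qed.

Lemma bmf_cst k : bmf (fun _ => k).
Proof. split; [exact: measurable_cst | by exists `|k|]. Qed.

Lemma EfD f g : bmf f -> bmf g -> Ef (fun x => f x + g x) = Ef f + Ef g.
Proof.
move=> bf bg; apply: EFin_inj; rewrite -Ef_E; last exact: bmfD.
rewrite EFinD -!Ef_E //.
exact: (integralD_EFin measurableT (bmf_int _ bf) (bmf_int _ bg)).
Qed.

Lemma EfZ k f : bmf f -> Ef (fun x => k * f x) = k * Ef f.
Proof.
move=> bf; apply: EFin_inj; rewrite -Ef_E; last exact: bmfZ.
rewrite EFinM -!Ef_E //.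
under eq_integral do rewrite EFinM.
exact: (integralZl measurableT (bmf_int _ bf)).
Qed.

Lemma Ef_cst k : Ef (fun _ => k) = k.
Proof.
rewrite /Ef. have -> := integral_cst P (@measurableT _ T) k%:E. match goal with |- context [(_ * ?m)%E] => have -> : m = 1%E by exact: probability_setT end. by rewrite mule1.
Qed.

Lemma Ef_le f g : bmf f -> bmf g -> (forall x, f x <= g x) -> Ef f <= Ef g.
Proof.
move=> bf bg fg; rewrite -lee_fin -!Ef_E //.
apply: le_integral => //; [exact: bmf_int _ bf | exact: bmf_int _ bg|].
by move=> x _; rewrite lee_fin.
Qed.


Section M.
Variables (X : T -> R) (mX : measurable_fun setT X).

Definition aN (N : nat) x := X x * (if `|X x| <= N%:R then 1 else 0).
Definition qN (N : nat) x := X x ^+ 2 * (if `|X x| <= N%:R then 1 else 0).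
Definition IM (M : R) x : R := if M < `|X x| then 1 else 0.

Lemma mif (N : nat) : measurable_fun setT (fun x => if `|X x| <= N%:R then (1:R) else 0).
Proof.
apply: measurable_fun_ifT; [|exact: measurable_cst|exact: measurable_cst].
apply: measurable_fun_ler; [exact: measurableT_comp | exact: measurable_cst].
Qed.

Lemma b_aN N : bmf (aN N).
Proof.
split; first by apply: measurable_funM => //; exact: mif.
exists N%:R => x; rewrite /aN; case: ifP => H; first by rewrite mulr1.
by rewrite mulr0 normr0.
Qed.

Lemma b_qN N : bmf (qN N).
Proof.
split; first by apply: measurable_funM; [exact: measurable_funX | exact: mif].
exists (N%:R ^+ 2) => x; rewrite /qN; case: ifP => H; last by rewrite mulr0 normr0 sqr_ge0.
rewrite mulr1 normrX; apply: lerXn2r => //; rewrite nnegrE //.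
Qed.

Lemma b_IM M : bmf (IM M).
Proof.
split.
  apply: measurable_fun_ifT; [|exact: measurable_cst|exact: measurable_cst].
  apply: measurable_fun_ltr; [exact: measurable_cst | exact: measurableT_comp].
by exists 1 => x; rewrite /IM; case: ifP; rewrite ?normr1 ?normr0.
Qed.

Lemma key (N : nat) (M t c : R) : 0 <= M -> 0 <= t -> `|c| <= 1 ->
  2 * t * c * Ef (aN N) <= 2 * t * M + (Ef (qN N) + t ^+ 2 * Ef (IM M)).
Proof.
move=> M0 t0 c1.
have := Ef_le (fun x => (2 * t * c) * aN N x)
  (fun x => 2 * t * M + (qN N x + t ^+ 2 * IM M x)) (bmfZ _ _ (b_aN N))
  (bmfD _ _ (bmf_cst _) (bmfD _ _ (b_qN N) (bmfZ _ _ (b_IM M)))).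
rewrite EfZ; last exact: b_aN.
rewrite EfD; [|exact: bmf_cst|exact: (bmfD _ _ (b_qN N) (bmfZ _ _ (b_IM M)))].
rewrite EfD; [|exact: b_qN|exact: (bmfZ _ _ (b_IM M))].
rewrite Ef_cst EfZ; last exact: b_IM.
apply => x; rewrite /aN /qN /IM; set y := X x.
have cy : c * y <= `|y|.
  apply: le_trans (ler_norm _) _; rewrite normrM.
  by apply: ler_piMl => //.
have ny : 0 <= `|y| by [].
have y2 : `|y| ^+ 2 = y ^+ 2 by rewrite real_normK // num_real.
case: ifP => H1; case: ifP => H2; rewrite ?mulr1 ?mulr0 ?addr0 ?add0r; try nra.
have h1 : t * (c * y) <= t * `|y| by apply: ler_wpM2l.
have h2 := sqr_ge0 (`|y| - t).
nra.
Qed.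


Lemma Ef_IM M : Ef (IM M) = fine (P [set w | M < `|X w|]).
Proof.
have mA : measurable [set w | M < `|X w|].
  have h := @measurable_fun_ltr _ _ _ setT (fun _ => M) (fun w => `|X w|)
     (measurable_cst _) (measurableT_comp (@normr_measurable R setT) mX) measurableT [set true] (ltac:(by [])).
  by rewrite setTI in h.
have := integral_indic P (@measurableT _ T) mA; rewrite setIT => <-.
rewrite /Ef; congr fine; apply: eq_integral => x _; rewrite /IM indicE.
case: ifP => H. by rewrite (mem_set (H : [set w | M < `|X w|] x)).
by rewrite memNset //= H.
Qed.

Lemma tail e : 0 < e -> exists n : nat, Ef (IM n%:R) <= e.
Proof.
move=> e0.
pose F n := [set w | (n%:R : R) < `|X w|].
have mF n : measurable (F n).
  have h := @measurable_fun_ltr _ _ _ setT (fun _ => n%:R) (fun w => `|X w|)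
     (measurable_cst _) (measurableT_comp (@normr_measurable R setT) mX) measurableT [set true] (ltac:(by [])).
  by rewrite setTI in h.
have cap0 : \bigcap_n F n = set0.
  apply/seteqP; split => // w Hw.
  have [n Hn] : exists n : nat, `|X w| < n%:R.
    exists (Num.truncn `|X w|).+1; case/andP: (Num.Theory.truncn_itv (normr_ge0 (X w))) => _ //.
  by have := Hw n I; rewrite /F /= ltNge (ltW Hn).
have hc := @nonincreasing_cvg_mu _ _ _ P F.
have /hc : (P (F 0%N) < +oo)%E by apply: (le_lt_trans (probability_le1 _ (mF 0%N))); rewrite ltry.
move=> /(_ mF); rewrite cap0 => /(_ measurable0).
have : {homo F : n m / (n <= m)%N >-> (m <= n)%O}.
  move=> n m nm; apply/subsetPset => w; rewrite /F /=.
  by apply: le_lt_trans; rewrite ler_nat.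
move=> /[swap] /[apply]; rewrite measure0 => /fine_cvgP [_].
move=> /cvgrPdist_lt /(_ e e0) [n _ Hn].
exists n; rewrite Ef_IM.
have := Hn n (leqnn n); rewrite /= sub0r normrN => H.
by apply: le_trans (ltW H); exact: ler_norm.
Qed.

End M.
End S.

End Aux.
Import Aux.

Theorem lemma7p1 (d : measure_display) (T : measurableType d) (R : realType)
  (P : probability T R) (h : nat -> {RV P >-> R}) :
  iid h ->
  forall eta : R, 0 < eta ->
  exists Neta : nat, forall N : nat, (Neta <= N)%N ->
    trunc_mean P (h 0%N) N ^+ 2 <= eta * N%:R * (1 + trunc_sigma P (h 0%N) N).
Proof.
move=> _ eta eta0.
have mX : measurable_fun setT (h 0%N : T -> R) by exact: measurable_funPT.
set X := (h 0%N : T -> R).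
have e0 : 0 < eta / 2 by rewrite divr_gt0.
have [n Hn] := tail P X mX (eta / 2) e0.
set M : R := n%:R.
have M0 : 0 <= M by rewrite /M.
exists (Num.truncn (4 * M ^+ 2 / eta)).+1 => N HN.
have hq : 0 <= 4 * M ^+ 2 / eta.
  by apply: divr_ge0; [apply: mulr_ge0 => //; exact: sqr_ge0 | exact: ltW].
have bnd : 4 * M ^+ 2 / eta < N%:R.
  have /andP[_ H] := Num.Theory.truncn_itv hq.
  by apply: lt_le_trans H _; rewrite ler_nat.
have N0 : 0 < N%:R :> R by apply: le_lt_trans bnd.
have bnd' : 4 * M ^+ 2 <= eta * N%:R.
  by rewrite -ler_pdivrMl // mulrC; exact: ltW.
have -> : trunc_mean P (h 0%N) N = Ef P (aN X N) by rewrite /trunc_mean unlock.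
have -> : trunc_sigma P (h 0%N) N = N%:R^-1 * Ef P (qN X N) by rewrite /trunc_sigma unlock.
set del := Ef P (aN X N).
set s := Ef P (qN X N).
set eps := Ef P (IM X M).
have s0 : 0 <= s.
  have := Ef_le P (fun _ => 0) (qN X N) (bmf_cst 0) (b_qN X mX N).
  rewrite Ef_cst; apply => x; rewrite /qN; case: ifP => _; rewrite ?mulr1 ?mulr0 ?sqr_ge0 //.
have eps0 : 0 <= eps.
  have := Ef_le P (fun _ => 0) (IM X M) (bmf_cst 0) (b_IM X mX M).
  rewrite Ef_cst; apply => x; rewrite /IM; case: ifP => _ //.
have -> : eta * N%:R * (1 + N%:R^-1 * s) = eta * N%:R + eta * s.
  by field; rewrite gt_eqF.
suff : del ^+ 2 <= 4 * M ^+ 2 + eta * s by move=> H; lra.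
have [c [c1 cd]] : exists c : R, `|c| <= 1 /\ c * del = `|del|.
  case: (lerP 0 del) => H.
    by exists 1; rewrite normr1 mul1r ger0_norm.
  by exists (-1); rewrite normrN normr1 mulN1r ltr0_norm.
have d2 : del ^+ 2 = `|del| ^+ 2 by rewrite real_normK // num_real.
rewrite d2; set b := `|del|.
have b0 : 0 <= b by exact: normr_ge0.
case: (eqVneq b 0) => [->|bn0].
  by rewrite expr0n /= addr_ge0 // ?mulr_ge0 // ?sqr_ge0 // ltW.
have bp : 0 < b by rewrite lt_def bn0 b0.
set e := eta / 2.
set t := b / e.
have t0 : 0 <= t by rewrite /t divr_ge0 // ltW.
have te : t * e = b by rewrite /t mulfVK // gt_eqF.
have K := key P X mX N M t c M0 t0 c1.
rewrite -/del -/s -/eps in K.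
have K2 : 2 * t * b <= 2 * t * M + (s + t ^+ 2 * e).
  have H1 : t ^+ 2 * eps <= t ^+ 2 * e by apply: ler_wpM2l; [exact: sqr_ge0 | exact: Hn].
  have H2 : 2 * t * c * del = 2 * t * b by rewrite -mulrA cd.
  rewrite H2 in K; lra.
have K3 : 2 * b ^+ 2 <= 2 * b * M + (e * s + b ^+ 2).
  have := ler_wpM2r (ltW e0) K2.
  have -> : 2 * t * b * e = 2 * b ^+ 2 by rewrite -te; ring.
  have -> : (2 * t * M + (s + t ^+ 2 * e)) * e = 2 * b * M + (e * s + b ^+ 2).
    by rewrite -te; ring.
  by [].
have K4 := sqr_ge0 (b - 2 * M).
have ee : 2 * e = eta by rewrite /e mulrC divfK // pnatr_eq0.
nra.
Qed.
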